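(* Let $\{\cdot,\cdot\}$ be a non-degenerate partially decoupled hydrodynamic Poisson bracket in the variables $(\rho,u,w_1,\dots,w_{N-2})$, and let $\boldsymbol\nu=\boldsymbol\nu(\mathbf w)$ be local coordinates in which the microscopic bracket takes the form $\int\partial_xF_k\,g_{kl}\,G_l\,\mathrm dx$ with $g$ a constant symmetric invertible matrix. Then the $N-2$ functionals $$C_k[\rho,\boldsymbol\nu]=\int\rho\,\nu_k\,\mathrm dx,\qquad k=1,\dots,N-2,$$ together with $$C[\rho]=\int\rho\,\mathrm dx,\qquad C[\rho,u,\boldsymbol\nu]=\int\Big(u-\frac{\rho}{2}\boldsymbol\nu\cdot g^{-1}\boldsymbol\nu\Big)\mathrm dx,$$ are Casimir invariants of the bracket, i.e. $\{C,F\}=0$ for every functional $F$.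
   Context: Fields vanish at infinity with all derivatives. A partially decoupled hydrodynamic bracket in $(\rho,u,w_1,\dots,w_{N-2})$ is $$\{F,G\}=\int\Big(\partial_xF_uG_\rho-F_\rho\partial_xG_u+\partial_xw_k\Big(F_u\frac{G_k}{\rho}-\frac{F_k}{\rho}G_u\Big)+\partial_x\Big(\frac{F_k}{\rho}\Big)\alpha_{kl}(\mathbf w)\frac{G_l}{\rho}+\frac{F_k}{\rho}\beta_{kl}(\mathbf w,\partial_x\mathbf w)\frac{G_l}{\rho}\Big)\mathrm dx,$$ with $F_u,F_\rho,F_k=\delta F/\delta w_k$ functional derivatives, sums over $k,l=1,\dots,N-2$, $\alpha(\mathbf w)$ symmetric depending only on $\mathbf w$, $\beta$ linear in $\partial_x\mathbf w$, $\partial_x\alpha=\beta+\beta^t$. Its microscopic bracket is $\{F,G\}_{\rm m}=\int(\partial_xF_k\alpha_{kl}(\mathbf w)G_l+F_k\beta_{kl}(\mathbf w,\partial_x\mathbf w)G_l)\mathrm dx$ on functionals of $\mathbf w$. Non-degenerate means the full coefficient matrix of $\partial_x F\cdot G$ is invertible; Poisson means the Jacobi identity holds. *)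

(* Defs.v *)
From Stdlib Require Import Reals Lra List Classical ClassicalEpsilon.
From Coquelicot Require Import Coquelicot.
Open Scope R_scope.

Definition fsum (n : nat) (f : nat -> R) : R :=
  fold_right Rplus 0 (map f (seq 0 n)).

Definition kdelta (i j : nat) : R := if Nat.eqb i j then 1 else 0.

(* A field configuration (rho, u, nu_0, ..., nu_{n-1}), n = N-2;
   components fn k with k >= n are ignored. *)
Record field := mkField { fr : R -> R; fu : R -> R; fn : nat -> R -> R }.

Definition field_axpy (phi : field) (e : R) (psi : field) : field :=
  mkField (fun x => fr phi x + e * fr psi x)
          (fun x => fu phi x + e * fu psi x)
          (fun k x => fn phi k x + e * fn psi k x).

Definition smooth (f : R -> R) : Prop := forall (m : nat) (x : R), ex_derive_n f m x.

Definition decaying (f : R -> R) : Prop :=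
  forall m : nat, is_lim (Derive_n f m) p_infty 0 /\ is_lim (Derive_n f m) m_infty 0.

Definition compact_support (f : R -> R) : Prop :=
  exists M : R, forall x, M < Rabs x -> f x = 0.

(* admissible configurations: smooth fields vanishing at infinity with all
   derivatives, rho nowhere zero (needed for the 1/rho in the bracket) *)
Definition admissible (n : nat) (phi : field) : Prop :=
  smooth (fr phi) /\ decaying (fr phi) /\ (forall x, fr phi x <> 0) /\
  smooth (fu phi) /\ decaying (fu phi) /\
  (forall k, (k < n)%nat -> smooth (fn phi k) /\ decaying (fn phi k)).

Definition test_field (n : nat) (psi : field) : Prop :=
  smooth (fr psi) /\ compact_support (fr psi) /\
  smooth (fu psi) /\ compact_support (fu psi) /\
  (forall k, (k < n)%nat -> smooth (fn psi k) /\ compact_support (fn psi k)) /\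
  (forall k, (n <= k)%nat -> forall x, fn psi k x = 0).

Definition improper_int_is (f : R -> R) (l : R) : Prop :=
  is_RInt_gen f (Rbar_locally m_infty) (Rbar_locally p_infty) l.

(* integral over the real line (0 if it does not converge) *)
Definition integral (f : R -> R) : R :=
  match excluded_middle_informative (exists l, improper_int_is f l) with
  | left H => proj1_sig (constructive_indefinite_description _ H)
  | right _ => 0
  end.

(* d = (dF/drho, dF/du, dF/dnu_k) is the (continuous) variational derivative of
   the functional F at phi:  d/de F[phi + e psi]|_{e=0} = int d . psi dx *)
Definition var_deriv (n : nat) (F : field -> R) (phi d : field) : Prop :=
  (forall x, continuous (fr d) x) /\ (forall x, continuous (fu d) x) /\
  (forall k, (k < n)%nat -> forall x, continuous (fn d k) x) /\
  forall psi, test_field n psi ->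
    exists l,
      improper_int_is (fun x => fr d x * fr psi x + fu d x * fu psi x
                               + fsum n (fun k => fn d k x * fn psi k x)) l /\
      is_derive (fun e => F (field_axpy phi e psi)) 0 l.

Definition regular_deriv (n : nat) (d : field) : Prop :=
  smooth (fr d) /\ decaying (fr d) /\ smooth (fu d) /\ decaying (fu d) /\
  (forall k, (k < n)%nat -> smooth (fn d k) /\ decaying (fn d k)).

(* Density of the partially decoupled hydrodynamic bracket written in the flat
   coordinates (rho,u,nu), where alpha = g (constant) and beta = 0. *)
Definition bracket_density (n : nat) (g : nat -> nat -> R) (phi dF dG : field)
  (x : R) : R :=
  Derive (fu dF) x * fr dG x - fr dF x * Derive (fu dG) x
  + fsum n (fun k => Derive (fn phi k) x *
        (fu dF x * fn dG k x / fr phi x - fn dF k x / fr phi x * fu dG x))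
  + fsum n (fun k => fsum n (fun l =>
        Derive (fun y => fn dF k y / fr phi y) x * g k l * (fn dG l x / fr phi x))).

Definition is_casimir (n : nat) (g : nat -> nat -> R) (C : field -> R) : Prop :=
  forall phi, admissible n phi ->
  forall dC, var_deriv n C phi dC ->
  forall (F : field -> R) (dF : field), var_deriv n F phi dF -> regular_deriv n dF ->
    improper_int_is (bracket_density n g phi dC dF) 0.

Definition C_rho (phi : field) : R := integral (fun x => fr phi x).
Definition C_nu (k : nat) (phi : field) : R := integral (fun x => fr phi x * fn phi k x).
Definition C_mix (n : nat) (ginv : nat -> nat -> R) (phi : field) : R :=
  integral (fun x => fu phi x - fr phi x / 2 *
     fsum n (fun k => fsum n (fun l => fn phi k x * ginv k l * fn phi l x))).

(* Main.v *)
Require Import Defs.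
From Stdlib Require Import Reals.
From Coquelicot Require Import Coquelicot.
From Stdlib Require Import Lra Lia List Classical ClassicalEpsilon FunctionalExtensionality.
Open Scope R_scope.

Lemma fsum_S n f : fsum (S n) f = fsum n f + f n.
Proof.
  unfold fsum. rewrite seq_S, map_app, fold_right_app. simpl.
  generalize (f n). intro a.
  induction (map f (seq 0 n)); simpl; [ring|rewrite IHl; ring].
Qed.

Lemma fsum_0 f : fsum 0 f = 0.
Proof. reflexivity. Qed.

Lemma fsum_ext n f g : (forall i, (i < n)%nat -> f i = g i) -> fsum n f = fsum n g.
Proof.
  induction n; intros H; [reflexivity|].
  rewrite !fsum_S, IHn, H; auto; intros; apply H; lia.
Qed.

Lemma fsum_plus n f g : fsum n (fun i => f i + g i) = fsum n f + fsum n g.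
Proof. induction n; [rewrite !fsum_0; ring|rewrite !fsum_S, IHn; ring]. Qed.

Lemma fsum_scal n c f : fsum n (fun i => c * f i) = c * fsum n f.
Proof. induction n; [rewrite !fsum_0; ring|rewrite !fsum_S, IHn; ring]. Qed.

Lemma fsum_zero n f : (forall i, (i < n)%nat -> f i = 0) -> fsum n f = 0.
Proof.
  intros H. rewrite (fsum_ext n f (fun _ => 0)) by auto.
  induction n; [reflexivity|rewrite fsum_S, IHn; [ring|intros; apply H; lia]].
Qed.

Lemma fsum_swap n m (f : nat -> nat -> R) :
  fsum n (fun i => fsum m (fun j => f i j)) = fsum m (fun j => fsum n (fun i => f i j)).
Proof.
  induction n.
  - simpl. symmetry. apply fsum_zero. intros; reflexivity.
  - rewrite fsum_S, IHn. rewrite <- fsum_plus. apply fsum_ext. intros. rewrite fsum_S. ring.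
Qed.

Lemma fsum_delta n k (a : nat -> R) : (k < n)%nat ->
  fsum n (fun i => (if Nat.eqb i k then 1 else 0) * a i) = a k.
Proof.
  induction n; intros Hk; [lia|].
  rewrite fsum_S. destruct (Nat.eq_dec k n) as [->|Hne].
  - rewrite Nat.eqb_refl. rewrite fsum_zero; [ring|].
    intros i Hi. destruct (Nat.eqb_spec i n); [lia|ring].
  - rewrite IHn by lia. destruct (Nat.eqb_spec n k); [lia|ring].
Qed.

Lemma fsum_delta' n k (a : nat -> R) : (k < n)%nat ->
  fsum n (fun i => a i * (if Nat.eqb i k then 1 else 0)) = a k.
Proof.
  intros Hk. rewrite <- (fsum_delta n k a Hk). apply fsum_ext. intros; ring.
Qed.

Lemma kdelta_eqb i j : kdelta i j = if Nat.eqb j i then 1 else 0.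
Proof. unfold kdelta. rewrite Nat.eqb_sym. reflexivity. Qed.

Lemma is_derive_fsum n (f f' : nat -> R -> R) x :
  (forall i, (i < n)%nat -> is_derive (f i) x (f' i x)) ->
  is_derive (fun y => fsum n (fun i => f i y)) x (fsum n (fun i => f' i x)).
Proof.
  induction n; intros H.
  - apply is_derive_ext with (fun _ => 0). intros; reflexivity.
    apply (is_derive_const (K:=R_AbsRing) (V:=R_NormedModule)).
  - apply is_derive_ext with (fun y => fsum n (fun i => f i y) + f n y).
    intros; rewrite fsum_S; reflexivity.
    rewrite fsum_S. apply (is_derive_plus (K:=R_AbsRing) (V:=R_NormedModule)). apply IHn. intros; apply H; lia. apply H; lia.
Qed.


Inductive good : (R -> R) -> Prop :=
| good_base k : good (fun x => exp (- / x) / x ^ k)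
| good_plus f g : good f -> good g -> good (fun x => f x + g x)
| good_scal c f : good f -> good (fun x => c * f x)
| good_ext f g : good f -> (forall x, 0 < x -> f x = g x) -> good g.

Lemma exp_pow_mul m a : exp (INR m * a) = exp a ^ m.
Proof.
  induction m.
  - simpl. replace (0 * a) with 0 by ring. apply exp_0.
  - rewrite S_INR. replace ((INR m + 1) * a) with (INR m * a + a) by ring.
    rewrite exp_plus, IHm. simpl. ring.
Qed.

Lemma base_bound k x : 0 < x -> exp (- / x) / x ^ k <= INR (S k) ^ (S k) * x.
Proof.
  intros Hx. set (m := S k).
  assert (Hm : 0 < INR m) by (apply lt_0_INR; unfold m; lia).
  set (t := / x / INR m).
  assert (Ht : 0 < t) by (unfold t; apply Rdiv_lt_0_compat; [apply Rinv_0_lt_compat|]; lra).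
  assert (E1 : exp (/ x) = exp t ^ m).
  { rewrite <- exp_pow_mul. f_equal. unfold t. field. lra. }
  assert (E2 : t ^ m <= exp t ^ m).
  { apply pow_incr. split; [lra|]. pose proof (exp_ineq1_le t). lra. }
  assert (E3 : (x * INR m) ^ m * t ^ m = 1).
  { rewrite <- Rpow_mult_distr. replace (x * INR m * t) with 1 by (unfold t; field; lra).
    apply pow1. }
  assert (Hxm : 0 < (x * INR m) ^ m) by (apply pow_lt; nra).
  assert (Htm : 0 < t ^ m) by (apply pow_lt; lra).
  assert (Hxk : 0 < x ^ k) by (apply pow_lt; lra).
  assert (E4 : exp (- / x) <= (x * INR m) ^ m).
  { rewrite exp_Ropp, E1.
    apply Rmult_le_reg_r with (exp t ^ m). nra.
    rewrite Rinv_l by (apply pow_nonzero; pose proof (exp_pos t); lra). nra. }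
  rewrite Rpow_mult_distr in E4.
  unfold Rdiv. apply Rmult_le_reg_r with (x ^ k); auto.
  rewrite Rmult_assoc, Rinv_l by lra. rewrite Rmult_1_r.
  replace (INR m ^ m * x * x ^ k) with (x ^ m * INR m ^ m) by (unfold m; simpl; ring).
  exact E4.
Qed.

Lemma frac_lt C eps : 0 <= C -> 0 < eps -> C * (eps / (C + 1)) < eps.
Proof.
  intros HC He. apply Rmult_lt_reg_r with (C + 1). lra.
  replace (C * (eps / (C + 1)) * (C + 1)) with (C * eps) by (field; lra). nra.
Qed.

Lemma good_lim f : good f -> forall eps, 0 < eps -> exists d, 0 < d /\
  forall x, 0 < x < d -> Rabs (f x) < eps.
Proof.
  induction 1; intros eps Heps.
  - set (C := INR (S k) ^ S k).
    assert (HC : 0 < C) by (apply pow_lt, lt_0_INR; lia).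
    exists (eps / (C + 1)). split. apply Rdiv_lt_0_compat; lra.
    intros x [Hx1 Hx2]. pose proof (base_bound k x Hx1) as B. fold C in B.
    assert (0 <= exp (- / x) / x ^ k).
    { unfold Rdiv. apply Rmult_le_pos. left; apply exp_pos.
      left; apply Rinv_0_lt_compat, pow_lt; lra. }
    rewrite Rabs_right by lra.
    assert (C * x < eps).
    { apply Rle_lt_trans with (C * (eps / (C + 1))). nra.
      apply frac_lt; lra. }
    lra.
  - destruct (IHgood1 (eps/2)) as [d1 [Hd1 H1]]; [lra|].
    destruct (IHgood2 (eps/2)) as [d2 [Hd2 H2]]; [lra|].
    exists (Rmin d1 d2). split. apply Rmin_glb_lt; auto.
    intros x Hx. pose proof (Rmin_l d1 d2). pose proof (Rmin_r d1 d2).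
    specialize (H1 x ltac:(lra)). specialize (H2 x ltac:(lra)).
    pose proof (Rabs_triang (f x) (g x)). lra.
  - destruct (IHgood (eps / (Rabs c + 1))) as [d [Hd Hf]].
    apply Rdiv_lt_0_compat; [lra|pose proof (Rabs_pos c); lra].
    exists d. split; auto. intros x Hx. specialize (Hf x Hx).
    rewrite Rabs_mult. pose proof (Rabs_pos c). pose proof (Rabs_pos (f x)).
    apply Rle_lt_trans with (Rabs c * (eps / (Rabs c + 1))). nra.
    apply frac_lt; lra.
  - destruct (IHgood eps Heps) as [d [Hd H']]. exists d. split; auto.
    intros x Hx. rewrite <- H0 by lra. auto.
Qed.

Lemma good_div f : good f -> good (fun x => f x / x).
Proof.
  induction 1.
  - apply good_ext with (fun x => exp (- / x) / x ^ (S k)). apply good_base.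
    intros x Hx. simpl. field. split; [apply pow_nonzero|]; lra.
  - eapply good_ext. apply (good_plus _ _ IHgood1 IHgood2). intros x Hx. simpl. field. lra.
  - eapply good_ext. apply (good_scal c _ IHgood). intros x Hx. simpl. field. lra.
  - eapply good_ext. apply IHgood. intros x Hx. simpl. rewrite H0; auto.
Qed.

Lemma is_derive_base k x : 0 < x ->
  is_derive (fun x => exp (- / x) / x ^ k) x
    (exp (- / x) / x ^ (S (S k)) + (- INR k) * (exp (- / x) / x ^ (S k))).
Proof.
  intros Hx. destruct k.
  - auto_derive. lra. simpl. field. lra.
  - auto_derive. split; [lra|split; [|auto]]. apply Rmult_integral_contrapositive_currified; [lra|apply pow_nonzero; lra].
    change (match k with 0%nat => 1 | S _ => INR k + 1 end) with (INR (S k)).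
    assert (x ^ k <> 0) by (apply pow_nonzero; lra). simpl. field. lra.

Qed.

Lemma is_derive_plusR (f g : R -> R) x a b :
  is_derive f x a -> is_derive g x b -> is_derive (fun y => f y + g y) x (a + b).
Proof. intros; apply (is_derive_plus (K:=R_AbsRing) (V:=R_NormedModule)); auto. Qed.

Lemma is_derive_multR (f g : R -> R) x a b :
  is_derive f x a -> is_derive g x b -> is_derive (fun y => f y * g y) x (a * g x + f x * b).
Proof. intros; apply (is_derive_mult (K:=R_AbsRing)); auto. intros; apply Rmult_comm. Qed.

Lemma is_derive_constR (c x : R) : is_derive (fun _ => c) x 0.
Proof. apply (is_derive_const (K:=R_AbsRing) (V:=R_NormedModule)). Qed.

Lemma good_deriv f : good f -> exists f', good f' /\ forall x, 0 < x -> is_derive f x (f' x).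
Proof.
  induction 1.
  - eexists. split. apply good_plus. apply (good_base (S (S k))). apply good_scal. apply (good_base (S k)).
    intros x Hx. apply is_derive_base; auto.
  - destruct IHgood1 as [f1 [G1 D1]]. destruct IHgood2 as [g1 [G2 D2]].
    exists (fun x => f1 x + g1 x). split. apply good_plus; auto.
    intros x Hx. apply is_derive_plusR; auto.
  - destruct IHgood as [f1 [G1 D1]]. exists (fun x => c * f1 x). split. apply good_scal; auto.
    intros x Hx. apply is_derive_scal; auto.
  - destruct IHgood as [f1 [G1 D1]]. exists f1. split; auto. intros x Hx.
    apply is_derive_ext_loc with f; auto.
    apply locally_interval with (Finite 0) p_infty; simpl; auto.
Qed.

Definition pw (f : R -> R) (x : R) : R := if Rlt_dec 0 x then f x else 0.

Lemma pw_deriv f f' : good f -> (forall x, 0 < x -> is_derive f x (f' x)) ->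
  forall x, is_derive (pw f) x (pw f' x).
Proof.
  intros Gf Df x. destruct (Rtotal_order x 0) as [Hx|[Hx|Hx]].
  - unfold pw at 2. destruct (Rlt_dec 0 x); [lra|].
    apply is_derive_ext_loc with (fun _ => 0). 2: apply is_derive_constR.
    apply locally_interval with m_infty (Finite 0); simpl; auto.
    intros y _ Hy. unfold pw. destruct (Rlt_dec 0 y); [lra|auto].
  - subst x. unfold pw at 2. destruct (Rlt_dec 0 0); [lra|].
    apply is_derive_Reals. intros eps Heps.
    destruct (good_lim _ (good_div f Gf) eps Heps) as [d [Hd H]].
    exists (mkposreal d Hd). intros h Hh Hhd. simpl in Hhd.
    rewrite Rplus_0_l. unfold pw. destruct (Rlt_dec 0 0); [lra|].
    destruct (Rlt_dec 0 h).
    + rewrite Rabs_right in Hhd by lra. replace ((f h - 0) / h - 0) with (f h / h) by (field; lra).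
      apply H. lra.
    + replace ((0 - 0) / h - 0) with 0 by (field; lra). rewrite Rabs_R0. lra.
  - unfold pw at 2. destruct (Rlt_dec 0 x); [|lra].
    apply is_derive_ext_loc with f. 2: auto.
    apply locally_interval with (Finite 0) p_infty; simpl; auto.
    intros y Hy _. unfold pw. destruct (Rlt_dec 0 y); [auto|lra].
Qed.

Lemma pw_comp_l f f' a x : good f -> (forall x, 0 < x -> is_derive f x (f' x)) ->
  is_derive (fun x => pw f (x - a)) x (pw f' (x - a)).
Proof.
  intros Gf Df.
  pose proof (is_derive_comp (pw f) (fun x => x - a) x (pw f' (x - a)) 1) as H.
  replace (pw f' (x - a)) with (scal 1 (pw f' (x - a))).
  apply H. apply pw_deriv; auto. auto_derive; auto.
  unfold scal; simpl; unfold mult; simpl. ring.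
Qed.

Lemma pw_comp_r f f' b x : good f -> (forall x, 0 < x -> is_derive f x (f' x)) ->
  is_derive (fun x => pw f (b - x)) x (- pw f' (b - x)).
Proof.
  intros Gf Df.
  pose proof (is_derive_comp (pw f) (fun x => b - x) x (pw f' (b - x)) (-1)) as H.
  replace (- pw f' (b - x)) with (scal (-1) (pw f' (b - x))).
  apply H. apply pw_deriv; auto. auto_derive; auto.
  unfold scal; simpl; unfold mult; simpl. ring.
Qed.

Inductive cls : (R -> R) -> Prop :=
| cls_base f g a b : good f -> good g -> cls (fun x => pw f (x - a) * pw g (b - x))
| cls_plus f g : cls f -> cls g -> cls (fun x => f x + g x)
| cls_scal c f : cls f -> cls (fun x => c * f x)
| cls_ext f g : cls f -> (forall x, f x = g x) -> cls g.

Lemma cls_deriv f : cls f -> exists f', cls f' /\ forall x, is_derive f x (f' x).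
Proof.
  induction 1.
  - destruct (good_deriv f H) as [f1 [G1 D1]]. destruct (good_deriv g H0) as [g1 [G2 D2]].
    exists (fun x => pw f1 (x - a) * pw g (b - x) + (-1) * (pw f (x - a) * pw g1 (b - x))).
    split. apply cls_plus. apply cls_base; auto. apply cls_scal. apply cls_base; auto.
    intros x. cbv beta.
    replace (pw f1 (x - a) * pw g (b - x) + -1 * (pw f (x - a) * pw g1 (b - x)))
      with (pw f1 (x - a) * pw g (b - x) + pw f (x - a) * (- pw g1 (b - x))) by ring.
    apply (is_derive_multR (fun x => pw f (x - a)) (fun x => pw g (b - x)));
      [apply pw_comp_l|apply pw_comp_r]; auto.
  - destruct IHcls1 as [f1 [G1 D1]]. destruct IHcls2 as [g1 [G2 D2]].
    exists (fun x => f1 x + g1 x). split. apply cls_plus; auto.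
    intros x. apply is_derive_plusR; auto.
  - destruct IHcls as [f1 [G1 D1]]. exists (fun x => c * f1 x). split. apply cls_scal; auto.
    intros x. apply is_derive_scal; auto.
  - destruct IHcls as [f1 [G1 D1]]. exists f1. split; auto. intros x.
    apply is_derive_ext with f; auto.
Qed.

Lemma cls_Derive_n n f : cls f -> exists g, cls g /\ forall x, Derive_n f n x = g x.
Proof.
  revert f. induction n; intros f Hf.
  - exists f; split; auto.
  - destruct (IHn f Hf) as [g [Gg Eg]]. destruct (cls_deriv g Gg) as [g1 [G1 D1]].
    exists g1. split; auto. intros x. simpl. rewrite (Derive_ext _ g) by auto.
    apply is_derive_unique; auto.
Qed.

Lemma cls_smooth f : cls f -> smooth f.
Proof.
  intros Hf m x. destruct m; simpl; auto.
  destruct (cls_Derive_n m f Hf) as [g [Gg Eg]]. destruct (cls_deriv g Gg) as [g1 [G1 D1]].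
  apply ex_derive_ext with g. intros; auto. eexists; eauto.
Qed.

Definition Eb (x : R) : R := exp (- / x).
Lemma good_Eb : good Eb.
Proof. eapply good_ext. apply (good_base 0). intros x Hx. unfold Eb. simpl. field. Qed.

Definition bump (x0 r x : R) : R := pw Eb (x - (x0 - r)) * pw Eb ((x0 + r) - x).

Lemma bump_smooth x0 r : smooth (bump x0 r).
Proof. apply cls_smooth. unfold bump. apply cls_base; apply good_Eb. Qed.

Lemma smooth_cont f : smooth f -> forall x, continuous f x.
Proof. intros H x. apply (ex_derive_continuous (K:=R_AbsRing) (V:=R_NormedModule)). exact (H 1%nat x). Qed.

Lemma bump_pos x0 r x : x0 - r < x < x0 + r -> 0 < bump x0 r x.
Proof.
  intros Hx. unfold bump, pw, Eb.
  destruct (Rlt_dec 0 (x - (x0 - r))); [|lra]. destruct (Rlt_dec 0 (x0 + r - x)); [|lra].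
  apply Rmult_lt_0_compat; apply exp_pos.
Qed.

Lemma bump_zero x0 r x : x <= x0 - r \/ x0 + r <= x -> bump x0 r x = 0.
Proof.
  intros Hx. unfold bump, pw.
  destruct (Rlt_dec 0 (x - (x0 - r))); destruct (Rlt_dec 0 (x0 + r - x)); try ring. lra.
Qed.


Lemma improper_unique f l1 l2 : improper_int_is f l1 -> improper_int_is f l2 -> l1 = l2.
Proof.
  unfold improper_int_is. intros H1 H2.
  pose proof (is_RInt_gen_unique (V:=R_CompleteNormedModule) (Fa:=Rbar_locally m_infty) (Fb:=Rbar_locally p_infty) f l1 H1) as E1.
  pose proof (is_RInt_gen_unique (V:=R_CompleteNormedModule) (Fa:=Rbar_locally m_infty) (Fb:=Rbar_locally p_infty) f l2 H2) as E2.
  congruence.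
Qed.

Lemma integral_of f l : improper_int_is f l -> integral f = l.
Proof.
  intros H. unfold integral. destruct excluded_middle_informative as [e|n].
  - destruct (constructive_indefinite_description _ e) as [l' Hl']. simpl.
    eapply improper_unique; eauto.
  - exfalso; apply n; eauto.
Qed.

Lemma integral_none f : ~ (exists l, improper_int_is f l) -> integral f = 0.
Proof.
  intros H. unfold integral. destruct excluded_middle_informative as [e|n]; tauto.
Qed.

Lemma RInt_zero_on h a x : (forall y, Rmin a x < y < Rmax a x -> h y = 0) -> RInt h a x = 0.
Proof.
  intros H. rewrite (RInt_ext h (fun _ => 0)) by auto.
  rewrite RInt_const. unfold scal; simpl; unfold mult; simpl. ring.
Qed.

Lemma improper_cs (h : R -> R) a b : a <= b -> (forall x, continuous h x) ->
  (forall x, x < a \/ b < x -> h x = 0) -> improper_int_is h (RInt h a b).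
Proof.
  intros Hab Hc Hz. pose (H := fun x => RInt h a x).
  assert (Ex : forall c d, ex_RInt h c d).
  { intros c d. apply (ex_RInt_continuous (V:=R_CompleteNormedModule)). intros; apply Hc. }
  assert (D : forall x, is_derive H x (h x)).
  { intros x. apply is_derive_RInt with a. apply filter_forall. intros y.
    apply RInt_correct. apply Ex. apply Hc. }
  assert (DH : Derive H = h).
  { apply functional_extensionality. intros x. apply is_derive_unique. apply D. }
  unfold improper_int_is. replace (RInt h a b) with (RInt h a b - 0) by ring.
  rewrite <- DH at 1.
  apply (is_RInt_gen_Derive (Fa:=Rbar_locally m_infty) (Fb:=Rbar_locally p_infty) H 0 (RInt h a b)).
  - apply filter_forall. intros. eexists. apply D.
  - apply filter_forall. intros. rewrite DH. apply Hc.
  - eapply filterlim_ext_loc. 2: apply filterlim_const.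
    exists a. intros x Hx. unfold H. symmetry. apply RInt_zero_on.
    intros y Hy. apply Hz. left. rewrite Rmax_left in Hy by lra. lra.
  - eapply filterlim_ext_loc. 2: apply filterlim_const.
    exists b. intros x Hx. unfold H. rewrite <- (RInt_Chasles h a b x) by apply Ex.
    rewrite (RInt_zero_on h b x). 
    + symmetry. apply Rplus_0_r.
    + intros y Hy. apply Hz. right. rewrite Rmin_left in Hy by lra. lra.
Qed.

Lemma cont_ex_RInt (h : R -> R) c d : (forall x, continuous h x) -> ex_RInt h c d.
Proof. intros Hc. apply (ex_RInt_continuous (V:=R_CompleteNormedModule)). intros; apply Hc. Qed.

Lemma improper_add_cs f0 I (h : R -> R) a b : improper_int_is f0 I -> a <= b ->
  (forall x, continuous h x) -> (forall x, x < a \/ b < x -> h x = 0) ->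
  improper_int_is (fun x => f0 x + h x) (I + RInt h a b).
Proof.
  intros H0 Hab Hc Hz. unfold improper_int_is.
  apply (is_RInt_gen_plus (V:=R_NormedModule) (Fa:=Rbar_locally m_infty) (Fb:=Rbar_locally p_infty)); auto.
  apply improper_cs; auto.
Qed.

Lemma improper_sub_cs f0 l (h : R -> R) a b : improper_int_is (fun x => f0 x + h x) l -> a <= b ->
  (forall x, continuous h x) -> (forall x, x < a \/ b < x -> h x = 0) ->
  improper_int_is f0 (l - RInt h a b).
Proof.
  intros H0 Hab Hc Hz. unfold improper_int_is.
  replace f0 with (fun x => minus (f0 x + h x) (h x)).
  apply (is_RInt_gen_minus (V:=R_NormedModule) (Fa:=Rbar_locally m_infty) (Fb:=Rbar_locally p_infty)); auto.
  apply improper_cs; auto.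
  apply functional_extensionality. intros x. unfold minus, plus, opp; simpl. ring.
Qed.

Lemma RInt_lin (A B : R -> R) a b e :
  (forall x, continuous A x) -> (forall x, continuous B x) ->
  RInt (fun x => e * A x + e ^ 2 * B x) a b = e * RInt A a b + e ^ 2 * RInt B a b.
Proof.
  intros HA HB. apply is_RInt_unique.
  apply (is_RInt_plus (V:=R_NormedModule) (fun x => e * A x) (fun x => e ^ 2 * B x)).
  - apply (is_RInt_scal (V:=R_NormedModule) A). apply (RInt_correct (V:=R_CompleteNormedModule)). apply cont_ex_RInt; auto.
  - apply (is_RInt_scal (V:=R_NormedModule) B). apply (RInt_correct (V:=R_CompleteNormedModule)). apply cont_ex_RInt; auto.
Qed.

Lemma cont_lin (A B : R -> R) e : (forall x, continuous A x) -> (forall x, continuous B x) ->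
  forall x, continuous (fun x => e * A x + e ^ 2 * B x) x.
Proof.
  intros HA HB x.
  apply (continuous_plus (U:=R_UniformSpace) (V:=R_NormedModule) (fun x => e * A x) (fun x => e^2 * B x)).
  - apply (continuous_mult (U:=R_UniformSpace) (K:=R_AbsRing) (fun _ => e) A). apply continuous_const. auto.
  - apply (continuous_mult (U:=R_UniformSpace) (K:=R_AbsRing) (fun _ => e^2) B). apply continuous_const. auto.
Qed.

Lemma aux_ring (u v : R) : 1 * u + 1 * ((1 + 1) * (0 * 1)) * v = u.
Proof. ring. Qed.

Lemma C_deriv_int f0 (A B : R -> R) I a b : improper_int_is f0 I -> a <= b ->
  (forall x, continuous A x) -> (forall x, continuous B x) ->
  (forall x, x < a \/ b < x -> A x = 0) -> (forall x, x < a \/ b < x -> B x = 0) ->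
  is_derive (fun e => integral (fun x => f0 x + e * A x + e ^ 2 * B x)) 0 (RInt A a b).
Proof.
  intros H0 Hab HA HB ZA ZB.
  apply is_derive_ext with (fun e => I + e * RInt A a b + e ^ 2 * RInt B a b).
  - intros e. symmetry. apply integral_of.
    replace (fun x => f0 x + e * A x + e ^ 2 * B x) with (fun x => f0 x + (e * A x + e ^ 2 * B x))
      by (apply functional_extensionality; intros; ring).
    replace (I + e * RInt A a b + e ^ 2 * RInt B a b) with (I + RInt (fun x => e * A x + e ^ 2 * B x) a b)
      by (rewrite RInt_lin; auto; ring).
    apply improper_add_cs; auto. apply cont_lin; auto.
    intros x Hx. rewrite ZA, ZB by auto. ring.
  - auto_derive; auto. change (RInt (fun x => A x) a b) with (RInt A a b). apply aux_ring.
Qed.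

Lemma C_deriv_none f0 (A B : R -> R) a b : ~ (exists I, improper_int_is f0 I) -> a <= b ->
  (forall x, continuous A x) -> (forall x, continuous B x) ->
  (forall x, x < a \/ b < x -> A x = 0) -> (forall x, x < a \/ b < x -> B x = 0) ->
  is_derive (fun e => integral (fun x => f0 x + e * A x + e ^ 2 * B x)) 0 0.
Proof.
  intros H0 Hab HA HB ZA ZB.
  apply is_derive_ext with (fun _ => 0). 2: apply is_derive_constR.
  intros e. symmetry. apply integral_none. intros [l Hl]. apply H0.
  exists (l - RInt (fun x => e * A x + e ^ 2 * B x) a b).
  apply (improper_sub_cs f0 l (fun x => e * A x + e ^ 2 * B x) a b); auto.
  - replace (fun x => f0 x + (e * A x + e ^ 2 * B x)) with (fun x => f0 x + e * A x + e ^ 2 * B x)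
      by (apply functional_extensionality; intros; ring). auto.
  - apply cont_lin; auto.
  - intros x Hx. rewrite ZA, ZB by auto. ring.
Qed.


Lemma cont_pos (D : R -> R) x0 : continuous D x0 -> 0 < D x0 ->
  exists r, 0 < r /\ forall x, x0 - r < x < x0 + r -> 0 < D x.
Proof.
  intros Hc Hp.
  assert (L : locally (D x0) (fun y => 0 < y)).
  { apply locally_interval with (Finite 0) p_infty; simpl; auto. }
  destruct (Hc _ L) as [eps Heps]. exists eps. split. apply cond_pos.
  intros x Hx. apply Heps. unfold ball; simpl; unfold AbsRing_ball, abs, minus, plus, opp; simpl.
  apply Rabs_def1; lra.
Qed.

Lemma cont_multR (f g : R -> R) x : continuous f x -> continuous g x -> continuous (fun y => f y * g y) x.
Proof. intros; apply (continuous_mult (U:=R_UniformSpace) (K:=R_AbsRing) f g); auto. Qed.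

Lemma cont_plusR (f g : R -> R) x : continuous f x -> continuous g x -> continuous (fun y => f y + g y) x.
Proof. intros; apply (continuous_plus (U:=R_UniformSpace) (V:=R_NormedModule) f g); auto. Qed.

Lemma cont_oppR (f : R -> R) x : continuous f x -> continuous (fun y => - f y) x.
Proof. intros; apply (continuous_opp (U:=R_UniformSpace) (V:=R_NormedModule) f); auto. Qed.

Lemma cont_constR (c x : R) : continuous (fun _ : R => c) x.
Proof. apply (continuous_const (U:=R_UniformSpace) (V:=R_UniformSpace)). Qed.

Lemma bump_cont x0 r x : continuous (bump x0 r) x.
Proof. apply smooth_cont, bump_smooth. Qed.

Lemma fund_pos (D : R -> R) x0 : (forall x, continuous D x) -> 0 < D x0 ->
  exists r, 0 < r /\ 0 < RInt (fun x => D x * bump x0 r x) (x0 - r) (x0 + r).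
Proof.
  intros Hc Hp. destruct (cont_pos D x0 (Hc x0) Hp) as [r [Hr H]].
  exists r. split; auto. apply RInt_gt_0. lra.
  - intros x Hx. apply Rmult_lt_0_compat. apply H; lra. apply bump_pos; lra.
  - intros x _. apply cont_multR; auto. apply bump_cont.
Qed.

Lemma fund (D : R -> R) : (forall x, continuous D x) ->
  (forall x0 r, 0 < r -> RInt (fun x => D x * bump x0 r x) (x0 - r) (x0 + r) = 0) ->
  forall x, D x = 0.
Proof.
  intros Hc HI x0. destruct (Rtotal_order (D x0) 0) as [Hn|[He|Hp]]; auto; exfalso.
  - destruct (fund_pos (fun x => - D x) x0) as [r [Hr Hpos]].
    intros; apply cont_oppR; auto. lra.
    rewrite (RInt_ext _ (fun x => opp (D x * bump x0 r x))) in Hpos.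
    rewrite (RInt_opp (V:=R_CompleteNormedModule)) in Hpos.
    rewrite HI in Hpos by auto. unfold opp in Hpos; simpl in Hpos. lra.
    apply cont_ex_RInt. intros; apply cont_multR; auto. apply bump_cont.
    intros; unfold opp; simpl; ring.
  - destruct (fund_pos D x0 Hc Hp) as [r [Hr Hpos]]. rewrite HI in Hpos; auto. lra.
Qed.

Lemma RInt_minusR (f g : R -> R) a b : (forall x, continuous f x) -> (forall x, continuous g x) ->
  RInt (fun x => f x - g x) a b = RInt f a b - RInt g a b.
Proof.
  intros Hf Hg. apply is_RInt_unique.
  apply (is_RInt_minus (V:=R_NormedModule) f g).
  apply (RInt_correct (V:=R_CompleteNormedModule)); apply cont_ex_RInt; auto.
  apply (RInt_correct (V:=R_CompleteNormedModule)); apply cont_ex_RInt; auto.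
Qed.

Lemma bump_cs x0 r : compact_support (bump x0 r).
Proof.
  exists (Rabs x0 + Rabs r). intros x Hx. apply bump_zero.
  pose proof (RRle_abs x0). pose proof (RRle_abs r).
  pose proof (RRle_abs (- x0)) as A1. pose proof (RRle_abs (- r)) as A2.
  rewrite Rabs_Ropp in A1. rewrite Rabs_Ropp in A2.
  destruct (Rle_dec x 0).
  - rewrite (Rabs_left1 x) in Hx by lra. left; lra.
  - rewrite (Rabs_right x) in Hx by lra. right; lra.
Qed.

Lemma ident n C phi dC (mk : (R -> R) -> field) (sel : field -> R -> R) (E : R -> R) :
  var_deriv n C phi dC ->
  (forall x0 r, test_field n (mk (bump x0 r))) ->
  (forall b x, fr dC x * fr (mk b) x + fu dC x * fu (mk b) x
               + fsum n (fun k => fn dC k x * fn (mk b) k x) = sel dC x * b x) ->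
  (forall x, continuous (sel dC) x) -> (forall x, continuous E x) ->
  (forall x0 r, 0 < r -> is_derive (fun e => C (field_axpy phi e (mk (bump x0 r)))) 0
                     (RInt (fun x => E x * bump x0 r x) (x0 - r) (x0 + r))) ->
  forall x, sel dC x = E x.
Proof.
  intros [_ [_ [_ HV]]] Ht Hdot Hs HE HD x.
  cut (sel dC x - E x = 0). lra.
  apply (fund (fun x => sel dC x - E x)).
  - intros y. apply cont_plusR; auto. apply cont_oppR; auto.
  - intros x0 r Hr. destruct (HV _ (Ht x0 r)) as [l [Hl Hd]].
    assert (Eq : (fun x => fr dC x * fr (mk (bump x0 r)) x + fu dC x * fu (mk (bump x0 r)) x +
                 fsum n (fun k => fn dC k x * fn (mk (bump x0 r)) k x))
                 = (fun x => sel dC x * bump x0 r x)).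
    { apply functional_extensionality; intros; apply Hdot. }
    rewrite Eq in Hl.
    assert (Hl2 : improper_int_is (fun x => sel dC x * bump x0 r x)
                    (RInt (fun x => sel dC x * bump x0 r x) (x0 - r) (x0 + r))).
    { apply improper_cs. lra. intros; apply cont_multR; auto; apply bump_cont.
      intros y Hy. rewrite bump_zero by lra. ring. }
    pose proof (improper_unique _ _ _ Hl Hl2) as E1.
    apply is_derive_unique in Hd. specialize (HD x0 r Hr). apply is_derive_unique in HD.
    rewrite (RInt_ext (fun x => (sel dC x - E x) * bump x0 r x) (fun x => sel dC x * bump x0 r x - E x * bump x0 r x)).
    2: (intros; apply Rmult_minus_distr_r).
    rewrite RInt_minusR.
    + rewrite <- E1, <- Hd, HD. apply Rminus_diag_eq. reflexivity.
    + intros; apply cont_multR; auto; apply bump_cont.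
    + intros; apply cont_multR; auto; apply bump_cont.
Qed.


Definition mkR (b : R -> R) := mkField b (fun _ => 0) (fun _ _ => 0).
Definition mkU (b : R -> R) := mkField (fun _ => 0) b (fun _ _ => 0).
Definition mkN (k : nat) (b : R -> R) :=
  mkField (fun _ => 0) (fun _ => 0) (fun i x => if Nat.eqb i k then b x else 0).

Lemma smooth0 : smooth (fun _ => 0).
Proof. intros m x. apply ex_derive_n_const. Qed.
Lemma cs0 : compact_support (fun _ => 0).
Proof. exists 0. auto. Qed.

Lemma test_mkR n x0 r : test_field n (mkR (bump x0 r)).
Proof.
  unfold test_field; simpl. split; [apply bump_smooth|]. split; [apply bump_cs|].
  split; [apply smooth0|]. split; [apply cs0|]. split; auto.
  intros; split; [apply smooth0|apply cs0].
Qed.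
Lemma test_mkU n x0 r : test_field n (mkU (bump x0 r)).
Proof.
  unfold test_field; simpl. split; [apply smooth0|]. split; [apply cs0|].
  split; [apply bump_smooth|]. split; [apply bump_cs|]. split; auto.
  intros; split; [apply smooth0|apply cs0].
Qed.
Lemma test_mkN n k x0 r : (k < n)%nat -> test_field n (mkN k (bump x0 r)).
Proof.
  intros Hk. unfold test_field; simpl. split; [apply smooth0|]. split; [apply cs0|].
  split; [apply smooth0|]. split; [apply cs0|]. split; [intros i Hi; split|].
  - destruct (Nat.eqb i k); [apply bump_smooth|apply smooth0].
  - destruct (Nat.eqb i k); [apply bump_cs|apply cs0].
  - intros i Hi x. destruct (Nat.eqb_spec i k); [lia|auto].
Qed.

Lemma dot_mkR n (d : field) b x : fr d x * fr (mkR b) x + fu d x * fu (mkR b) x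
   + fsum n (fun k => fn d k x * fn (mkR b) k x) = fr d x * b x.
Proof. simpl. rewrite fsum_zero by (intros; ring). ring. Qed.
Lemma dot_mkU n (d : field) b x : fr d x * fr (mkU b) x + fu d x * fu (mkU b) x
   + fsum n (fun k => fn d k x * fn (mkU b) k x) = fu d x * b x.
Proof. simpl. rewrite fsum_zero by (intros; ring). ring. Qed.
Lemma dot_mkN n j (d : field) b x : (j < n)%nat -> fr d x * fr (mkN j b) x + fu d x * fu (mkN j b) x
   + fsum n (fun k => fn d k x * fn (mkN j b) k x) = fn d j x * b x.
Proof.
  intros Hj. simpl.
  rewrite (fsum_ext n _ (fun i => (fn d i x * b x) * (if Nat.eqb i j then 1 else 0))).
  rewrite (fsum_delta' n j (fun i => fn d i x * b x)) by auto. ring.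
  intros i _. destruct (Nat.eqb i j); ring.
Qed.

Lemma RInt_zero_mult (f : R -> R) a b : RInt (fun x => 0 * f x) a b = 0.
Proof. apply RInt_zero_on. intros; ring. Qed.

Lemma ident_case n (Ig : field -> R -> R) phi dC mk sel (E : R -> R) (Bc : (R -> R) -> R -> R) :
  var_deriv n (fun p => integral (Ig p)) phi dC ->
  (forall x0 r, test_field n (mk (bump x0 r))) ->
  (forall b x, fr dC x * fr (mk b) x + fu dC x * fu (mk b) x
               + fsum n (fun k => fn dC k x * fn (mk b) k x) = sel dC x * b x) ->
  (forall x, continuous (sel dC) x) -> (forall x, continuous E x) ->
  (forall x0 r x, continuous (Bc (bump x0 r)) x) ->
  (forall b e x, Ig (field_axpy phi e (mk b)) x = Ig phi x + e * (E x * b x) + e ^ 2 * (Bc b x * b x)) ->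
  ((exists I, improper_int_is (Ig phi) I) -> forall x, sel dC x = E x) /\
  (~ (exists I, improper_int_is (Ig phi) I) -> forall x, sel dC x = 0).
Proof.
  intros Hv Ht Hd Hs HE HB Hp. split.
  - intros [I HI]. apply (ident n _ phi dC mk sel E Hv Ht Hd Hs HE).
    intros x0 r Hr.
    apply is_derive_ext with (fun e => integral (fun x => Ig phi x + e * (E x * bump x0 r x)
                                      + e ^ 2 * (Bc (bump x0 r) x * bump x0 r x))).
    { intros e. f_equal. apply functional_extensionality. intros x. rewrite Hp. reflexivity. }
    apply (C_deriv_int (Ig phi) (fun x => E x * bump x0 r x) (fun x => Bc (bump x0 r) x * bump x0 r x) I); auto.
    lra. intros; apply cont_multR; auto; apply bump_cont.
    intros; apply cont_multR; auto; apply bump_cont.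
    intros x Hx. rewrite bump_zero by lra. ring.
    intros x Hx. rewrite bump_zero by lra. ring.
  - intros HN. apply (ident n _ phi dC mk sel (fun _ => 0) Hv Ht Hd Hs).
    intros; apply cont_constR.
    intros x0 r Hr. rewrite RInt_zero_mult.
    apply is_derive_ext with (fun e => integral (fun x => Ig phi x + e * (E x * bump x0 r x)
                                      + e ^ 2 * (Bc (bump x0 r) x * bump x0 r x))).
    { intros e. f_equal. apply functional_extensionality. intros x. rewrite Hp. reflexivity. }
    apply (C_deriv_none (Ig phi) (fun x => E x * bump x0 r x) (fun x => Bc (bump x0 r) x * bump x0 r x) (x0 - r) (x0 + r)); auto.
    lra. intros; apply cont_multR; auto; apply bump_cont.
    intros; apply cont_multR; auto; apply bump_cont.
    intros x Hx. rewrite bump_zero by lra. ring.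
    intros x Hx. rewrite bump_zero by lra. ring.
Qed.


Lemma smooth_D (f : R -> R) x : smooth f -> is_derive f x (Derive f x).
Proof. intros H. apply Derive_correct. exact (H 1%nat x). Qed.

Lemma smooth_cont_D (f : R -> R) x : smooth f -> continuous (Derive f) x.
Proof. intros H. apply (ex_derive_continuous (K:=R_AbsRing) (V:=R_NormedModule)). exact (H 2%nat x). Qed.

Lemma decay_p (f : R -> R) : decaying f -> is_lim f p_infty 0.
Proof. intros H. exact (proj1 (H 0%nat)). Qed.
Lemma decay_m (f : R -> R) : decaying f -> is_lim f m_infty 0.
Proof. intros H. exact (proj2 (H 0%nat)). Qed.

Lemma improper_deriv (Phi dens : R -> R) : (forall x, is_derive Phi x (dens x)) ->
  (forall x, continuous dens x) -> is_lim Phi p_infty 0 -> is_lim Phi m_infty 0 ->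
  improper_int_is dens 0.
Proof.
  intros HD Hc Hp Hm.
  assert (DE : Derive Phi = dens).
  { apply functional_extensionality. intros x. apply is_derive_unique. auto. }
  unfold improper_int_is. replace 0 with (0 - 0) by ring. rewrite <- DE.
  apply (is_RInt_gen_Derive (Fa:=Rbar_locally m_infty) (Fb:=Rbar_locally p_infty) Phi 0 0).
  - apply filter_forall. intros. eexists. apply HD.
  - apply filter_forall. intros. rewrite DE. apply Hc.
  - exact Hm.
  - exact Hp.
Qed.

Lemma dens_rewrite n g phi dC dF (Er Eu : R -> R) (En : nat -> R -> R) :
  (forall x, fr dC x = Er x) -> (forall x, fu dC x = Eu x) ->
  (forall j x, (j < n)%nat -> fn dC j x = En j x) ->
  forall x, bracket_density n g phi dC dF x =
   Derive Eu x * fr dF x - Er x * Derive (fu dF) x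
  + fsum n (fun k => Derive (fn phi k) x *
        (Eu x * fn dF k x / fr phi x - En k x / fr phi x * fu dF x))
  + fsum n (fun k => fsum n (fun l =>
        Derive (fun y => En k y / fr phi y) x * g k l * (fn dF l x / fr phi x))).
Proof.
  intros HR HU HN x. unfold bracket_density.
  rewrite (Derive_ext (fu dC) Eu) by auto. rewrite HR, HU.
  f_equal; [f_equal|].
  - apply fsum_ext. intros k Hk. rewrite HN by auto. reflexivity.
  - apply fsum_ext. intros k Hk. apply fsum_ext. intros l Hl.
    rewrite (Derive_ext (fun y => fn dC k y / fr phi y) (fun y => En k y / fr phi y)).
    reflexivity. intros; rewrite HN; auto.
Qed.

Lemma bracket_zeroC n g phi dC dF :
  (forall x, fr dC x = 0) -> (forall x, fu dC x = 0) ->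
  (forall j x, (j < n)%nat -> fn dC j x = 0) ->
  improper_int_is (bracket_density n g phi dC dF) 0.
Proof.
  intros HR HU HN.
  replace (bracket_density n g phi dC dF) with (fun _ : R => 0).
  - apply (improper_deriv (fun _ => 0)). intros; apply is_derive_constR.
    intros; apply cont_constR. apply is_lim_const. apply is_lim_const.
  - apply functional_extensionality. intros x.
    rewrite (dens_rewrite n g phi dC dF (fun _ => 0) (fun _ => 0) (fun _ _ => 0)) by auto.
    rewrite Derive_const.
    rewrite fsum_zero. rewrite fsum_zero. ring.
    + intros k Hk. apply fsum_zero. intros l Hl.
      rewrite (Derive_ext _ (fun _ => 0)). rewrite Derive_const. ring.
      intros; unfold Rdiv; ring.
    + intros k Hk. unfold Rdiv; ring.
Qed.

Lemma casimir_rho n g : is_casimir n g C_rho.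
Proof.
  intros phi Hadm dC Hv F dF HvF Hreg.
  pose proof Hv as [HcR [HcU [HcN _]]].
  pose (Ig := fun (p : field) (x : R) => fr p x).
  assert (IR := ident_case n Ig phi dC mkR (fun d x => fr d x) (fun _ => 1) (fun _ _ => 0)
     Hv (test_mkR n) (dot_mkR n dC) HcR (fun x => cont_constR 1 x) (fun _ _ x => cont_constR 0 x)
     ltac:(intros; unfold Ig; simpl; ring)).
  assert (IU := ident_case n Ig phi dC mkU (fun d x => fu d x) (fun _ => 0) (fun _ _ => 0)
     Hv (test_mkU n) (dot_mkU n dC) HcU (fun x => cont_constR 0 x) (fun _ _ x => cont_constR 0 x)
     ltac:(intros; unfold Ig; simpl; ring)).
  pose proof (fun j (Hj : (j < n)%nat) => ident_case n Ig phi dC (mkN j) (fun d x => fn d j x) (fun _ => 0) (fun _ _ => 0)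
     Hv (fun x0 r => test_mkN n j x0 r Hj) (fun b x => dot_mkN n j dC b x Hj) (HcN j Hj) (fun x => cont_constR 0 x) (fun _ _ x => cont_constR 0 x)
     ltac:(intros; unfold Ig; simpl; ring)) as IN.
  destruct (classic (exists I, improper_int_is (Ig phi) I)) as [HI|HI].
  - destruct IR as [IR _]. destruct IU as [IU _].
    specialize (IR HI). specialize (IU HI).
    assert (IN' : forall j x, (j < n)%nat -> fn dC j x = 0).
    { intros j x Hj. destruct (IN j Hj) as [A _]. apply A; auto. }
    destruct Hreg as [_ [_ [SU [DU _]]]].
    replace (bracket_density n g phi dC dF) with (fun x => - Derive (fu dF) x).
    + apply (improper_deriv (fun x => - fu dF x)).
      * intros x. apply (is_derive_opp (K:=R_AbsRing) (V:=R_NormedModule)). apply smooth_D; auto.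
      * intros x. apply cont_oppR. apply smooth_cont_D; auto.
      * replace (Finite 0) with (Rbar_opp 0) by (simpl; f_equal; ring).
        apply is_lim_opp. apply decay_p; auto.
      * replace (Finite 0) with (Rbar_opp 0) by (simpl; f_equal; ring).
        apply is_lim_opp. apply decay_m; auto.
    + apply functional_extensionality. intros x.
      rewrite (dens_rewrite n g phi dC dF (fun _ => 1) (fun _ => 0) (fun _ _ => 0)) by auto.
      rewrite Derive_const.
      rewrite fsum_zero. rewrite fsum_zero. ring.
      * intros k Hk. apply fsum_zero. intros l Hl.
        rewrite (Derive_ext _ (fun _ => 0)). rewrite Derive_const. ring.
        intros; unfold Rdiv; ring.
      * intros k Hk. unfold Rdiv; ring.
  - apply bracket_zeroC.
    + apply (proj2 IR HI).
    + apply (proj2 IU HI).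
    + intros j x Hj. apply (proj2 (IN j Hj) HI).
Qed.


Lemma lim_mult0 (f g : R -> R) p : is_lim f p 0 -> is_lim g p 0 -> is_lim (fun x => f x * g x) p 0.
Proof.
  intros Hf Hg. replace (Finite 0) with (Rbar_mult 0 0) by (simpl; f_equal; ring).
  apply is_lim_mult; auto. simpl; auto.
Qed.

Lemma lim_opp0 (f : R -> R) p : is_lim f p 0 -> is_lim (fun x => - f x) p 0.
Proof.
  intros Hf. replace (Finite 0) with (Rbar_opp 0) by (simpl; f_equal; ring).
  apply is_lim_opp; auto.
Qed.


Lemma is_derive_oppR (f : R -> R) x a : is_derive f x a -> is_derive (fun y => - f y) x (- a).
Proof. intros. apply (is_derive_opp (K:=R_AbsRing) (V:=R_NormedModule)); auto. Qed.

Lemma casimir_nu n g k : (k < n)%nat -> is_casimir n g (C_nu k).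
Proof.
  intros Hk phi Hadm dC Hv F dF HvF Hreg.
  pose proof Hv as [HcR [HcU [HcN _]]].
  destruct Hadm as [SR [DR [NZ [SU [DU HN]]]]].
  destruct (HN k Hk) as [SK DK].
  pose (Ig := fun (p : field) (x : R) => fr p x * fn p k x).
  assert (IR := ident_case n Ig phi dC mkR (fun d x => fr d x) (fun x => fn phi k x) (fun _ _ => 0)
     Hv (test_mkR n) (dot_mkR n dC) HcR (smooth_cont _ SK) (fun _ _ x => cont_constR 0 x)
     ltac:(intros; unfold Ig; simpl; ring)).
  assert (IU := ident_case n Ig phi dC mkU (fun d x => fu d x) (fun _ => 0) (fun _ _ => 0)
     Hv (test_mkU n) (dot_mkU n dC) HcU (fun x => cont_constR 0 x) (fun _ _ x => cont_constR 0 x)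
     ltac:(intros; unfold Ig; simpl; ring)).
  pose proof (fun j (Hj : (j < n)%nat) => ident_case n Ig phi dC (mkN j) (fun d x => fn d j x)
     (fun x => if Nat.eqb k j then fr phi x else 0) (fun _ _ => 0)
     Hv (fun x0 r => test_mkN n j x0 r Hj) (fun b x => dot_mkN n j dC b x Hj) (HcN j Hj)
     ltac:(intros x; destruct (Nat.eqb k j); [apply smooth_cont; auto|apply cont_constR])
     (fun _ _ x => cont_constR 0 x)
     ltac:(intros; unfold Ig; simpl; destruct (Nat.eqb k j); ring)) as IN.
  destruct (classic (exists I, improper_int_is (Ig phi) I)) as [HI|HI].
  - destruct IR as [IR _]. destruct IU as [IU _].
    specialize (IR HI). specialize (IU HI).
    assert (IN' : forall j x, (j < n)%nat -> fn dC j x = (fun j x => if Nat.eqb k j then fr phi x else 0) j x).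
    { intros j x Hj. destruct (IN j Hj) as [A _]. apply A; auto. }
    destruct Hreg as [_ [_ [SUF [DUF _]]]].
    replace (bracket_density n g phi dC dF)
      with (fun x => - (Derive (fn phi k) x * fu dF x + fn phi k x * Derive (fu dF) x)).
    + apply (improper_deriv (fun x => - (fn phi k x * fu dF x))).
      * intros x. apply is_derive_oppR. apply is_derive_multR; apply smooth_D; auto.
      * intros x. apply cont_oppR. apply cont_plusR; apply cont_multR;
          auto using smooth_cont_D, smooth_cont.
      * apply lim_opp0, lim_mult0; apply decay_p; auto.
      * apply lim_opp0, lim_mult0; apply decay_m; auto.
    + apply functional_extensionality. intros x.
      rewrite (dens_rewrite n g phi dC dF (fun x => fn phi k x) (fun _ => 0) _ IR IU IN').
      rewrite Derive_const.
      rewrite (fsum_zero n (fun k0 => fsum n _)).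
      rewrite (fsum_ext n _ (fun j => (if Nat.eqb j k then 1 else 0) * (- Derive (fn phi j) x * fu dF x))).
      rewrite fsum_delta by auto. ring.
      * intros j Hj. rewrite (Nat.eqb_sym k j). destruct (Nat.eqb j k). field. apply NZ. field. apply NZ.
      * intros j Hj. apply fsum_zero. intros l Hl.
        rewrite (Derive_ext _ (fun _ => if Nat.eqb k j then 1 else 0)). rewrite Derive_const. ring.
        intros t. destruct (Nat.eqb k j). field. apply NZ. unfold Rdiv; ring.
  - apply bracket_zeroC.
    + apply (proj2 IR HI).
    + apply (proj2 IU HI).
    + intros j x Hj. apply (proj2 (IN j Hj) HI).
Qed.


Lemma fsum_scal_r n c f : fsum n (fun i => f i * c) = fsum n f * c.
Proof. rewrite (fsum_ext n _ (fun i => c * f i)) by (intros; ring). rewrite fsum_scal. ring. Qed.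

Definition Qf n (G : nat -> nat -> R) (a : nat -> R) :=
  fsum n (fun k => fsum n (fun l => a k * G k l * a l)).
Definition Sj n (G : nat -> nat -> R) (a : nat -> R) (j : nat) :=
  fsum n (fun l => G j l * a l) + fsum n (fun i => a i * G i j).

Lemma Q_pert n G a e c j : (j < n)%nat ->
  Qf n G (fun i => a i + e * (if Nat.eqb i j then c else 0)) =
  Qf n G a + e * (c * Sj n G a j) + e ^ 2 * (c * c * G j j).
Proof.
  intros Hj. unfold Qf, Sj.
  assert (inner : forall i, fsum n (fun l => (a i + e * (if Nat.eqb i j then c else 0)) * G i l *
                       (a l + e * (if Nat.eqb l j then c else 0))) =
     fsum n (fun l => a i * G i l * a l) + e * (if Nat.eqb i j then c else 0) * fsum n (fun l => G i l * a l)
     + (e * (a i * G i j * c) + e ^ 2 * ((if Nat.eqb i j then c else 0) * G i j * c))).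
  { intros i.
    rewrite (fsum_ext n _ (fun l => (a i * G i l * a l + e * (if Nat.eqb i j then c else 0) * (G i l * a l))
        + (e * (a i * G i l * c) + e ^ 2 * ((if Nat.eqb i j then c else 0) * G i l * c)) * (if Nat.eqb l j then 1 else 0))).
    - rewrite fsum_plus, fsum_plus, fsum_scal.
      rewrite (fsum_delta' n j (fun l => e * (a i * G i l * c) + e ^ 2 * ((if Nat.eqb i j then c else 0) * G i l * c))) by auto.
      ring.
    - intros l Hl. destruct (Nat.eqb l j); ring. }
  rewrite (fsum_ext n _ _ (fun i _ => inner i)).
  rewrite (fsum_ext n _ (fun i => (fsum n (fun l => a i * G i l * a l) + e * (a i * G i j * c))
        + (e * c * fsum n (fun l => G i l * a l) + e ^ 2 * (c * G i j * c)) * (if Nat.eqb i j then 1 else 0))).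
  - rewrite fsum_plus, fsum_plus.
    rewrite (fsum_delta' n j (fun i => e * c * fsum n (fun l => G i l * a l) + e ^ 2 * (c * G i j * c))) by auto.
    rewrite fsum_scal.
    rewrite (fsum_ext n (fun i => a i * G i j * c) (fun i => c * (a i * G i j))) by (intros; ring).
    rewrite fsum_scal. ring.
  - intros i Hi. destruct (Nat.eqb i j); ring.
Qed.

Lemma S_g n g G (a : nat -> R) l :
  (forall i j, (i < n)%nat -> (j < n)%nat -> g i j = g j i) ->
  (forall i j, (i < n)%nat -> (j < n)%nat -> fsum n (fun k => g i k * G k j) = kdelta i j) ->
  (forall i j, (i < n)%nat -> (j < n)%nat -> fsum n (fun k => G i k * g k j) = kdelta i j) ->
  (l < n)%nat ->
  fsum n (fun k => Sj n G a k * g k l) = 2 * a l.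
Proof.
  intros gs gG Gg Hl. unfold Sj.
  rewrite (fsum_ext n _ (fun k => fsum n (fun m => a m * (G k m * g k l)) + fsum n (fun i => a i * (G i k * g k l)))).
  2: { intros k Hk. rewrite Rmult_plus_distr_r, <- !fsum_scal_r. f_equal; apply fsum_ext; intros; ring. }
  rewrite fsum_plus, (fsum_swap n n (fun k m => a m * (G k m * g k l))), (fsum_swap n n (fun k i => a i * (G i k * g k l))).
  rewrite (fsum_ext n (fun m => fsum n (fun k => a m * (G k m * g k l))) (fun m => a m * (if Nat.eqb m l then 1 else 0))).
  rewrite (fsum_ext n (fun m => fsum n (fun k => a m * (G m k * g k l))) (fun m => a m * (if Nat.eqb m l then 1 else 0))).
  rewrite fsum_delta' by auto. ring.
  - intros m Hm. rewrite fsum_scal. rewrite Gg by auto. unfold kdelta. reflexivity.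
  - intros m Hm. rewrite fsum_scal.
    rewrite (fsum_ext n _ (fun k => g l k * G k m)) by (intros k0 Hk0; rewrite (gs k0 l); auto; ring).
    rewrite gG by auto. rewrite kdelta_eqb. reflexivity.
Qed.

Lemma Q'_eq n G (a a' : nat -> R) :
  fsum n (fun k => a' k * Sj n G a k) =
  fsum n (fun i => fsum n (fun l => a' i * G i l * a l + a i * G i l * a' l)).
Proof.
  unfold Sj.
  rewrite (fsum_ext n (fun i => fsum n (fun l => a' i * G i l * a l + a i * G i l * a' l))
     (fun i => fsum n (fun l => a' i * G i l * a l) + fsum n (fun l => a i * G i l * a' l)))
     by (intros; apply fsum_plus).
  rewrite fsum_plus. rewrite (fsum_swap n n (fun i l => a i * G i l * a' l)).
  rewrite <- fsum_plus. apply fsum_ext. intros k Hk.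
  rewrite Rmult_plus_distr_l, <- !fsum_scal. f_equal; apply fsum_ext; intros; ring.
Qed.


Lemma cont_fsum n (f : nat -> R -> R) x : (forall i, (i < n)%nat -> continuous (f i) x) ->
  continuous (fun y => fsum n (fun i => f i y)) x.
Proof.
  induction n; intros H.
  - apply continuous_ext with (fun _ => 0). intros; reflexivity. apply cont_constR.
  - apply continuous_ext with (fun y => fsum n (fun i => f i y) + f n y).
    intros; rewrite fsum_S; reflexivity.
    apply cont_plusR. apply IHn; intros; apply H; lia. apply H; lia.
Qed.

Lemma lim_fsum0 n (f : nat -> R -> R) p : (forall i, (i < n)%nat -> is_lim (f i) p 0) ->
  is_lim (fun y => fsum n (fun i => f i y)) p 0.
Proof.
  induction n; intros H.
  - apply is_lim_ext with (fun _ => 0). intros; reflexivity. apply is_lim_const.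
  - apply is_lim_ext with (fun y => fsum n (fun i => f i y) + f n y).
    intros; rewrite fsum_S; reflexivity.
    eapply is_lim_plus. apply IHn; intros; apply H; lia. apply H; lia.
    simpl. unfold is_Rbar_plus; simpl. f_equal. f_equal. ring.
Qed.

Lemma lim_mult_c (f : R -> R) c p : is_lim f p 0 -> is_lim (fun x => f x * c) p 0.
Proof.
  intros Hf. replace (Finite 0) with (Rbar_mult 0 c) by (simpl; f_equal; ring).
  apply is_lim_mult; auto. apply is_lim_const. simpl; auto.
Qed.

Lemma cont_multc (f : R -> R) c x : continuous f x -> continuous (fun y => f y * c) x.
Proof. intros; apply cont_multR; auto; apply cont_constR. Qed.
Lemma cont_cmult (f : R -> R) c x : continuous f x -> continuous (fun y => c * f y) x.
Proof. intros; apply cont_multR; auto; apply cont_constR. Qed.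


Lemma is_derive_multc (f : R -> R) c x a : is_derive f x a -> is_derive (fun y => f y * c) x (a * c).
Proof.
  intros H. replace (a * c) with (a * c + f x * 0) by ring.
  apply (is_derive_multR f (fun _ => c)); auto. apply is_derive_constR.
Qed.


Lemma casimir_mix n g ginv
  (g_sym : forall i j, (i < n)%nat -> (j < n)%nat -> g i j = g j i)
  (g_ginv : forall i j, (i < n)%nat -> (j < n)%nat ->
              fsum n (fun k => g i k * ginv k j) = kdelta i j)
  (ginv_g : forall i j, (i < n)%nat -> (j < n)%nat ->
              fsum n (fun k => ginv i k * g k j) = kdelta i j) :
  is_casimir n g (C_mix n ginv).
Proof.
  intros phi Hadm dC Hv F dF HvF Hreg.
  pose proof Hv as [HcR [HcU [HcN _]]].
  destruct Hadm as [SR [DR [NZ [SU [DU HN]]]]].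
  pose (Qx := fun x => fsum n (fun k => fsum n (fun l => fn phi k x * ginv k l * fn phi l x))).
  pose (Sx := fun j x => Sj n ginv (fun i => fn phi i x) j).
  pose (Sx' := fun j x => Sj n ginv (fun i => Derive (fn phi i) x) j).
  assert (CQ : forall x, continuous Qx x).
  { intros x. unfold Qx. apply cont_fsum. intros k Hk. apply cont_fsum. intros l Hl.
    apply cont_multR. apply cont_multc. apply smooth_cont, HN; auto. apply smooth_cont, HN; auto. }
  assert (CS : forall j x, continuous (Sx j) x).
  { intros j x. unfold Sx, Sj. apply cont_plusR; apply cont_fsum; intros i Hi.
    apply cont_cmult. apply smooth_cont, HN; auto. apply cont_multc. apply smooth_cont, HN; auto. }
  pose (Ig := fun (p : field) (x : R) => fu p x - fr p x / 2 *
     fsum n (fun k => fsum n (fun l => fn p k x * ginv k l * fn p l x))).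
  assert (Q0 : forall e x, fsum n (fun k => fsum n (fun l => (fn phi k x + e * 0) * ginv k l * (fn phi l x + e * 0))) = Qx x).
  { intros e x. unfold Qx. apply fsum_ext. intros. apply fsum_ext. intros. cbv beta. ring. }
  assert (IR := ident_case n Ig phi dC mkR (fun d x => fr d x) (fun x => - (Qx x / 2)) (fun _ _ => 0)
     Hv (test_mkR n) (dot_mkR n dC) HcR
     ltac:(intros x; apply cont_oppR; apply cont_multc; auto) (fun _ _ x => cont_constR 0 x)
     ltac:(intros b e x; unfold Ig; simpl; rewrite Q0; fold (Qx x); unfold Rdiv; ring)).
  assert (IU := ident_case n Ig phi dC mkU (fun d x => fu d x) (fun _ => 1) (fun _ _ => 0)
     Hv (test_mkU n) (dot_mkU n dC) HcU (fun x => cont_constR 1 x) (fun _ _ x => cont_constR 0 x)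
     ltac:(intros b e x; unfold Ig; simpl; rewrite Q0; fold (Qx x); unfold Rdiv; ring)).
  pose proof (fun j (Hj : (j < n)%nat) => ident_case n Ig phi dC (mkN j) (fun d x => fn d j x)
     (fun x => - (fr phi x / 2 * Sx j x)) (fun b x => - (fr phi x / 2 * (ginv j j * b x)))
     Hv (fun x0 r => test_mkN n j x0 r Hj) (fun b x => dot_mkN n j dC b x Hj) (HcN j Hj)
     ltac:(intros x; apply cont_oppR; apply cont_multR; [apply cont_multc; apply smooth_cont; auto|auto])
     ltac:(intros x0 r x; apply cont_oppR; apply cont_multR; [apply cont_multc; apply smooth_cont; auto|apply cont_cmult; apply bump_cont])
     ltac:(intros b e x; unfold Ig; simpl;
           change (fsum n (fun k => fsum n (fun l => (fn phi k x + e * (if Nat.eqb k j then b x else 0)) * ginv k l * (fn phi l x + e * (if Nat.eqb l j then b x else 0)))))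
             with (Qf n ginv (fun i => fn phi i x + e * (if Nat.eqb i j then b x else 0)));
           rewrite Q_pert by auto; unfold Qf, Sx, Rdiv; ring)) as IN.
  destruct (classic (exists I, improper_int_is (Ig phi) I)) as [HI|HI].
  2: { apply bracket_zeroC.
    + apply (proj2 IR HI).
    + apply (proj2 IU HI).
    + intros j x Hj. apply (proj2 (IN j Hj) HI). }
  destruct IR as [IR _]. destruct IU as [IU _].
  specialize (IR HI). specialize (IU HI).
  assert (IN' : forall j x, (j < n)%nat -> fn dC j x = (fun j x => - (fr phi x / 2 * Sx j x)) j x).
  { intros j x Hj. destruct (IN j Hj) as [A _]. apply A; auto. }
  destruct Hreg as [_ [_ [SUF [DUF HNF]]]].
  assert (DQ : forall x, is_derive Qx x (fsum n (fun k => Derive (fn phi k) x * Sx k x))).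
  { intros x. unfold Sx. rewrite (Q'_eq n ginv (fun i => fn phi i x) (fun i => Derive (fn phi i) x)).
    apply (is_derive_fsum n (fun k y => fsum n (fun l => fn phi k y * ginv k l * fn phi l y))
      (fun k y => fsum n (fun l => Derive (fn phi k) x * ginv k l * fn phi l y + fn phi k y * ginv k l * Derive (fn phi l) x))).
    intros k Hk.
    apply (is_derive_fsum n (fun l y => fn phi k y * ginv k l * fn phi l y)
      (fun l y => Derive (fn phi k) x * ginv k l * fn phi l y + fn phi k y * ginv k l * Derive (fn phi l) x)).
    intros l Hl.
    apply (is_derive_multR (fun y => fn phi k y * ginv k l) (fn phi l)).
    apply is_derive_multc. apply smooth_D, HN; auto. apply smooth_D, HN; auto. }
  assert (DS : forall j x, is_derive (Sx j) x (Sx' j x)).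
  { intros j x. unfold Sx, Sx', Sj. apply is_derive_plusR.
    - apply (is_derive_fsum n (fun l y => ginv j l * fn phi l y) (fun l y => ginv j l * Derive (fn phi l) x)).
      intros l Hl. apply is_derive_scal. apply smooth_D, HN; auto.
    - apply (is_derive_fsum n (fun l y => fn phi l y * ginv l j) (fun l y => Derive (fn phi l) x * ginv l j)).
      intros l Hl. apply is_derive_multc. apply smooth_D, HN; auto. }
  replace (bracket_density n g phi dC dF)
    with (fun x => / 2 * (fsum n (fun k => Derive (fn phi k) x * Sx k x) * fu dF x + Qx x * Derive (fu dF) x)).
  - apply (improper_deriv (fun x => Qx x * fu dF x * / 2)).
    + intros x. replace (/ 2 * (fsum n (fun k => Derive (fn phi k) x * Sx k x) * fu dF x + Qx x * Derive (fu dF) x))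
        with ((fsum n (fun k => Derive (fn phi k) x * Sx k x) * fu dF x + Qx x * Derive (fu dF) x) * / 2) by ring.
      apply is_derive_multc. apply is_derive_multR; auto. apply smooth_D; auto.
    + intros x. apply cont_cmult. apply cont_plusR; apply cont_multR; auto.
      * apply cont_fsum. intros k Hk. apply cont_multR; auto. apply smooth_cont_D, HN; auto.
      * apply smooth_cont; auto.
      * apply smooth_cont_D; auto.
    + apply lim_mult_c, lim_mult0. 2: apply decay_p; auto.
      unfold Qx. apply lim_fsum0; intros k Hk; apply lim_fsum0; intros l Hl.
      apply (lim_mult0 (fun y => fn phi k y * ginv k l) (fn phi l)). apply (lim_mult_c (fn phi k)).
      apply decay_p, HN; auto. apply decay_p, HN; auto.
    + apply lim_mult_c, lim_mult0. 2: apply decay_m; auto.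
      unfold Qx. apply lim_fsum0; intros k Hk; apply lim_fsum0; intros l Hl.
      apply (lim_mult0 (fun y => fn phi k y * ginv k l) (fn phi l)). apply (lim_mult_c (fn phi k)).
      apply decay_m, HN; auto. apply decay_m, HN; auto.
  - apply functional_extensionality. intros x.
    rewrite (dens_rewrite n g phi dC dF (fun x => - (Qx x / 2)) (fun _ => 1) _ IR IU IN').
    rewrite Derive_const.
    assert (T4 : fsum n (fun k => fsum n (fun l =>
        Derive (fun y => - (fr phi y / 2 * Sx k y) / fr phi y) x * g k l * (fn dF l x / fr phi x)))
        = (-1) * fsum n (fun l => Derive (fn phi l) x * (fn dF l x / fr phi x))).
    { rewrite (fsum_ext n _ (fun k => fsum n (fun l => (- / 2 * (fn dF l x / fr phi x)) * (Sx' k x * g k l)))).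
      - rewrite fsum_swap. rewrite <- fsum_scal. apply fsum_ext. intros l Hl.
        rewrite fsum_scal. unfold Sx'. rewrite (S_g n g ginv) by auto. field. apply NZ.
      - intros k Hk. apply fsum_ext. intros l Hl.
        rewrite (Derive_ext _ (fun y => Sx k y * (- / 2))).
        rewrite (is_derive_unique _ _ (Sx' k x * (- / 2))). unfold Rdiv; ring.
        apply is_derive_multc; auto.
        intros t. field. apply NZ. }
    rewrite T4.
    rewrite (fsum_ext n (fun k => Derive (fn phi k) x * (1 * fn dF k x / fr phi x - - (fr phi x / 2 * Sx k x) / fr phi x * fu dF x))
       (fun k => Derive (fn phi k) x * (fn dF k x / fr phi x) + (Derive (fn phi k) x * Sx k x) * (fu dF x / 2))).
    rewrite fsum_plus, fsum_scal_r. unfold Rdiv; ring.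
    intros k Hk. field. apply NZ.
Qed.


Theorem lemma2 (n : nat) (g ginv : nat -> nat -> R)
  (g_sym : forall i j, (i < n)%nat -> (j < n)%nat -> g i j = g j i)
  (g_ginv : forall i j, (i < n)%nat -> (j < n)%nat ->
              fsum n (fun k => g i k * ginv k j) = kdelta i j)
  (ginv_g : forall i j, (i < n)%nat -> (j < n)%nat ->
              fsum n (fun k => ginv i k * g k j) = kdelta i j) :
  is_casimir n g C_rho /\
  (forall k, (k < n)%nat -> is_casimir n g (C_nu k)) /\
  is_casimir n g (C_mix n ginv).
Proof.
  split; [apply casimir_rho|split].
  - intros k Hk. apply casimir_nu; auto.
  - apply casimir_mix; auto.
Qed.
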